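(* Let $C$ be a finite cyclic group of even order. Then there exist permutations $\alpha$ and $\beta$ of $C$ such that $c\,\alpha(c)=\beta(c)$ for all $c\in C$ with $c\neq1$, and moreover $\beta(1)=1$ and $\alpha(1)\neq1$. *)

(* Defs.v *)
From mathcomp Require Import all_boot all_fingroup all_solvable.
Set Implicit Arguments. Unset Strict Implicit. Unset Printing Implicit Defensive.

(* Main.v *)
Require Import Defs.
From mathcomp Require Import all_boot all_fingroup all_solvable.
From mathcomp Require Import zify.
Local Open Scope group_scope.

Definition fa (m k : nat) : nat :=
  if k == 0%N then m else if (k < m)%N then k
  else if (k < (2 * m).-1)%N then k.+1 else 0%N.
Definition fb (m k : nat) : nat :=
  if k == 0%N then 0%N else if (k < m)%N then (2 * k)%N
  else if (k < (2 * m).-1)%N then (2 * k + 1 - 2 * m)%N else (2 * m).-1.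

Lemma fa_lt m k : (0 < m)%N -> (k < 2 * m)%N -> (fa m k < 2 * m)%N.
Proof. rewrite /fa => ? ?; repeat case: ifP => ? //; lia. Qed.
Lemma fb_lt m k : (0 < m)%N -> (k < 2 * m)%N -> (fb m k < 2 * m)%N.
Proof. rewrite /fb => ? ?; repeat case: ifP => ? //; lia. Qed.
Lemma fa_inj m a b : (0 < m)%N -> (a < 2 * m)%N -> (b < 2 * m)%N ->
  fa m a = fa m b -> a = b.
Proof. rewrite /fa => ? ? ?; repeat case: ifP => ? //; lia. Qed.
Lemma fb_inj m a b : (0 < m)%N -> (a < 2 * m)%N -> (b < 2 * m)%N ->
  fb m a = fb m b -> a = b.
Proof. rewrite /fb => ? ? ?; repeat case: ifP => ? //; lia. Qed.
Lemma fab m k : (0 < m)%N -> (k < 2 * m)%N -> k != 0%N ->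
  ((k + fa m k) %% (2 * m))%N = fb m k.
Proof.
move=> ? ? ?; rewrite /fa /fb; case: ifP => ?; first lia.
case: ifP => ?; first (rewrite modn_small; lia).
case: ifP => ?.
  have -> : (k + k.+1 = (2 * k + 1 - 2 * m) + 2 * m)%N by lia.
  by rewrite modnDr modn_small //; lia.
by rewrite addn0 modn_small //; lia.
Qed.

Theorem lemma4p6 (gT : finGroupType)
  (Hcyc : cyclic [set: gT]) (Heven : ~~ odd #|gT|) :
  exists alpha beta : {perm gT},
    [/\ (forall c : gT, c != 1 -> c * alpha c = beta c),
        beta 1 = 1 & alpha 1 != 1].
Proof.
have [g Hg] := cyclicP Hcyc.
have Hn : #[g] = #|gT| by rewrite /order -Hg cardsT.
have lgP : forall x : gT, {i | (i < #[g])%N & x = g ^+ i}.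
  by move=> x; apply: cyclePmin; rewrite -Hg inE.
pose lg x := s2val (lgP x).
have lgE x : x = g ^+ lg x by rewrite /lg; case: (lgP x).
have lgL x : (lg x < #[g])%N by rewrite /lg; case: (lgP x).
pose m := #[g]./2.
have Hm : #[g] = (2 * m)%N.
  rewrite /m -{1}(odd_double_half #[g]) Hn (negbTE Heven) -mul2n; lia.
have m0 : (0 < m)%N by have := order_gt0 g; lia.
have expI a b : (a < #[g])%N -> (b < #[g])%N -> g ^+ a = g ^+ b -> a = b.
  move=> ha hb /eqP; rewrite eq_expg_mod_order !modn_small //; exact/eqP.
have injf (f : nat -> nat) : (forall k, k < 2 * m -> f k < 2 * m)%N ->
   (forall a b, a < 2 * m -> b < 2 * m -> f a = f b -> a = b)%N ->
   injective (fun x => g ^+ f (lg x)).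
  move=> Hl Hi x y /expI; rewrite Hm => H.
  rewrite (lgE x) (lgE y) (Hi (lg x) (lg y)) // -?Hm //.
  by apply: H; apply: Hl; rewrite -Hm.
pose alpha := perm (injf (fa m) (fun k => @fa_lt m k m0) (fun a b => @fa_inj m a b m0)).
pose beta := perm (injf (fb m) (fun k => @fb_lt m k m0) (fun a b => @fb_inj m a b m0)).
have lg1 : lg 1 = 0%N.
  by apply: expI; [exact: lgL | exact: order_gt0 | rewrite -lgE].
exists alpha, beta; split.
- move=> c c1; rewrite !permE /=.
  have c0 : lg c != 0%N.
    by apply: contraNneq c1 => h; rewrite (lgE c) h.
  rewrite {1}(lgE c) -expgD -(@fab m (lg c) m0) ?expg_mod_order -?Hm //.
  by rewrite expg_mod_order.
- by rewrite permE /= lg1.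
- rewrite permE /= lg1 /fa /= -order_dvdn Hm.
  apply/negP => /dvdn_leq; lia.
Qed.
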